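(* Let $S\subseteq\mathcal{RV}$ be finite, $\mu\in\mathcal{D}(\mathrm{Mem}[S])$, and let $Y=\{y_0,\dots,y_{K-1}\}$ be distinct randomized variables. Then $Y$ satisfies NA in $\mu$ (in particular $Y\subseteq S$) if and only if for every deterministic memory $\sigma$ (with domain contained in $\mathcal{DV}$) we have $(\sigma,\mu)\models\circledast_{i=0}^{K}[y_i]$.
   Context: Variables are split into disjoint sets $\mathcal{DV}$ (deterministic) and $\mathcal{RV}$ (randomized); values are real numbers. For finite $S$, $\mathrm{Mem}[S]$ is the set of maps $S\to\mathbb{R}$ ordered pointwise; $p_A$ is restriction; $\mathcal{D}(\cdot)$ denotes countably supported probability distributions; $\mathrm{dom}(\mu)=S$ for $\mu\in\mathcal{D}(\mathrm{Mem}[S])$; $\pi_A\mu$ is the marginal on $A$; $\mu\sqsubseteq\mu'$ iff $\mathrm{dom}(\mu)\subseteq\mathrm{dom}(\mu')$ and $\pi_{\mathrm{dom}(\mu)}\mu'=\mu$. A partition is a set of pairwise disjoint nonempty sets; $\mathcal{T}$ coarsens $\mathcal{S}$ if $\bigcup\mathcal{T}=\bigcup\mathcal{S}$ and each element of $\mathcal{T}$ is a union of a subfamily of $\mathcal{S}$. $\mu$ is $\mathcal{S}$-PNA (partition $\mathcal{S}$ with $\bigcup\mathcal{S}\subseteq\mathrm{dom}\mu$) if for every $\mathcal{T}$ coarsening $\mathcal{S}$ and every family $(f_A:\mathrm{Mem}[A]\to[0,\infty))_{A\in\mathcal{T}}$ all non-decreasing or all non-increasing, $\mathbb{E}_{m\sim\mu}[\prod_Af_A(p_Am)]\le\prod_A\mathbb{E}_{m\sim\mu}[f_A(p_Am)]$.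 $\mu_1\oplus\mu_2$ (domains $S,T$) is empty if $S\cap T\ne\emptyset$, and otherwise the set of $\mu\in\mathcal{D}(\mathrm{Mem}[S\cup T])$ with $\pi_S\mu=\mu_1$, $\pi_T\mu=\mu_2$ that are $(\mathcal{S}\cup\mathcal{T})$-PNA whenever $\mathcal{S}$ partitions a subset of $S$, $\mathcal{T}$ partitions a subset of $T$, $\mu_1$ is $\mathcal{S}$-PNA and $\mu_2$ is $\mathcal{T}$-PNA. $Y$ satisfies NA in $\mu$ if $Y\subseteq\mathrm{dom}(\mu)$ and for all disjoint $A,B\subseteq Y$ and all $f:\mathrm{Mem}[A]\to\mathbb{R}$, $g:\mathrm{Mem}[B]\to\mathbb{R}$ both non-decreasing or both non-increasing, each bounded below or bounded above, $\mathbb{E}_{m\sim\mu}[f(p_Am)g(p_Bm)]\le\mathbb{E}[f(p_Am)]\mathbb{E}[g(p_Bm)]$. States are pairs $(\sigma,\mu)$ of a deterministic memory $\sigma$ and a distribution $\mu$. Satisfaction: $(\sigma,\mu)\models[y]$ iff $y\in\mathrm{dom}(\sigma)\cup\mathrm{dom}(\mu)$; $(\sigma,\mu)\models P\circledast Q$ iff there exist $\mu',\mu_1,\mu_2$ with $\mu'\sqsubseteq\mu$, $\mu'\in\mu_1\oplus\mu_2$, $(\sigma,\mu_1)\models P$ and $(\sigma,\mu_2)\models Q$. The iterated conjunction is $\circledast_{i=0}^{1}P_i=P_0$ and $\circledast_{i=0}^{N}P_i=(\circledast_{i=0}^{N-1}P_i)\circledast P_{N-1}$ for $N>1$. *)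

(* Defs.v *)
From HB Require Import structures.
From mathcomp Require Import all_boot all_order all_algebra.
From mathcomp Require Import finmap.
From mathcomp Require Import all_classical all_reals.
From mathcomp Require Import topology ereal normedtype sequences.
Set Implicit Arguments. Unset Strict Implicit. Unset Printing Implicit Defensive.
Import Order.TTheory GRing.Theory Num.Theory.
Local Open Scope ring_scope.
Local Open Scope fset_scope.

(* Variables: (true, n) is the n-th randomized variable (RV),
   (false, n) the n-th deterministic variable (DV).  DV and RV are disjoint. *)
Definition var := (bool * nat)%type.
Definition isRV (x : var) : bool := x.1.

Section Defs.
Variable R : realType.

(* Memories are total maps var -> R; a memory in Mem[A] is represented by any
   map, read through the restriction [restr A] (the canonical representative
   is 0 outside A). *)
Definition rmem := var -> R.
Definition restr (A : {fset var}) (m : rmem) : rmem :=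
  fun x => if x \in A then m x else 0.

(* A countably supported probability distribution on Mem[dom]: atoms
   [pt n] (read through [restr dom]) with weights [wt n]. *)
Record distr := Distr { ddom : {fset var}; pt : nat -> rmem; wt : nat -> R }.

Definition valid_distr (mu : distr) : Prop :=
  (forall n, 0 <= wt mu n) /\ (\sum_(0 <= n <oo) (wt mu n)%:E = 1)%E.

Definition mass (mu : distr) (A : {fset var}) (m : rmem) : \bar R :=
  (\sum_(0 <= n <oo) (wt mu n * (`[< restr A (pt mu n) = restr A m >])%:R)%:E)%E.

Definition is_marginal (mu : distr) (A : {fset var}) (nu : distr) : Prop :=
  ddom nu = A /\ forall m, mass mu A m = mass nu A m.

Definition dsub (mu' mu : distr) : Prop :=
  ddom mu' `<=` ddom mu /\ is_marginal mu (ddom mu') mu'.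

Definition Enn (mu : distr) (h : rmem -> R) : \bar R :=
  (\sum_(0 <= n <oo) (wt mu n * h (pt mu n))%:E)%E.

(* expectation of a real-valued function: E[h^+] - E[h^-] (extended reals;
   the undefined case +oo - +oo evaluates to -oo by the library convention) *)
Definition Ex (mu : distr) (h : rmem -> R) : \bar R :=
  (Enn mu (fun m => Num.max (h m) 0%R) - Enn mu (fun m => Num.max (- h m)%R 0%R))%E.

Definition nondecr_on (A : {fset var}) (f : rmem -> R) : Prop :=
  forall m m', (forall x, x \in A -> m x <= m' x) -> f (restr A m) <= f (restr A m').
Definition nonincr_on (A : {fset var}) (f : rmem -> R) : Prop :=
  forall m m', (forall x, x \in A -> m x <= m' x) -> f (restr A m') <= f (restr A m).
Definition bdd_below_on (A : {fset var}) (f : rmem -> R) : Prop :=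
  exists c, forall m, c <= f (restr A m).
Definition bdd_above_on (A : {fset var}) (f : rmem -> R) : Prop :=
  exists c, forall m, f (restr A m) <= c.

Definition cover (P : {fset {fset var}}) : {fset var} := \bigcup_(A <- P) A.
Definition is_partition (P : {fset {fset var}}) : Prop :=
  (forall A, A \in P -> A != fset0) /\
  (forall A B, A \in P -> B \in P -> A != B -> [disjoint A & B]).
Definition coarsens (T S : {fset {fset var}}) : Prop :=
  cover T = cover S /\
  forall A, A \in T -> exists F : {fset {fset var}}, F `<=` S /\ A = cover F.

Definition PNA (mu : distr) (S : {fset {fset var}}) : Prop :=
  is_partition S /\ cover S `<=` ddom mu /\
  forall T : {fset {fset var}}, is_partition T -> coarsens T S ->
  forall f : {fset var} -> rmem -> R,
    (forall A, A \in T -> forall m, 0 <= f A (restr A m)) ->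
    ((forall A, A \in T -> nondecr_on A (f A)) \/
     (forall A, A \in T -> nonincr_on A (f A))) ->
    (Enn mu (fun m => (\prod_(A <- T) f A (restr A m))%R)
      <= \prod_(A <- T) Enn mu (fun m => f A (restr A m)))%E.

Definition in_oplus (mu mu1 mu2 : distr) : Prop :=
  [disjoint ddom mu1 & ddom mu2] /\
  ddom mu = ddom mu1 `|` ddom mu2 /\
  is_marginal mu (ddom mu1) mu1 /\ is_marginal mu (ddom mu2) mu2 /\
  forall S T : {fset {fset var}},
    is_partition S -> cover S `<=` ddom mu1 ->
    is_partition T -> cover T `<=` ddom mu2 ->
    PNA mu1 S -> PNA mu2 T -> PNA mu (S `|` T).

Definition NA (mu : distr) (Y : {fset var}) : Prop :=
  Y `<=` ddom mu /\
  forall A B : {fset var}, A `<=` Y -> B `<=` Y -> [disjoint A & B] ->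
  forall f g : rmem -> R,
    ((nondecr_on A f /\ nondecr_on B g) \/ (nonincr_on A f /\ nonincr_on B g)) ->
    (bdd_below_on A f \/ bdd_above_on A f) ->
    (bdd_below_on B g \/ bdd_above_on B g) ->
    (Ex mu (fun m => (f (restr A m) * g (restr B m))%R)
      <= Ex mu (fun m => f (restr A m)) * Ex mu (fun m => g (restr B m)))%E.

(* deterministic memories: only the domain matters for the assertions below *)
Record dmem := DMem { sdom : {fset var}; sval : var -> R }.

Definition assn := dmem -> distr -> Prop.

Definition sat_var (y : var) : assn :=
  fun sigma mu => y \in sdom sigma \/ y \in ddom mu.

Definition sat_star (P Q : assn) : assn :=
  fun sigma mu => exists mu' mu1 mu2 : distr,
    valid_distr mu' /\ valid_distr mu1 /\ valid_distr mu2 /\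
    dsub mu' mu /\ in_oplus mu' mu1 mu2 /\ P sigma mu1 /\ Q sigma mu2.

Fixpoint istar (P : nat -> assn) (N : nat) : assn :=
  match N with
  | 0 => P 0%N
  | 1 => P 0%N
  | N'.+1 => sat_star (istar P N') (P N')
  end.

End Defs.

(* Main.v *)
Require Import Defs.
From HB Require Import structures.
From mathcomp Require Import all_boot all_order all_algebra.
From mathcomp Require Import finmap.
From mathcomp Require Import all_classical all_reals.
From mathcomp Require Import topology ereal normedtype sequences esum.
From mathcomp Require Import ring lra.
Set Implicit Arguments. Unset Strict Implicit. Unset Printing Implicit Defensive.
Import Order.TTheory GRing.Theory Num.Theory.
Local Open Scope ring_scope.
Local Open Scope fset_scope.
Lemma restr_restr (R : realType) (A B : {fset var}) (m : rmem R) :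
  A `<=` B -> restr A (restr B m) = restr A m.
Proof.
move=> /fsubsetP AB; apply/funext => x; rewrite /restr.
by case: ifP => // /AB ->.
Qed.

Lemma restr0 (R : realType) (m m' : rmem R) : restr fset0 m = restr fset0 m'.
Proof. by apply/funext => x; rewrite /restr in_fset0. Qed.

Lemma sub_cover (P : {fset {fset var}}) (A : {fset var}) : A \in P -> A `<=` Defs.cover P.
Proof. by move=> AP; rewrite /cover; apply: bigfcup_sup. Qed.

Lemma cover_sub (P : {fset {fset var}}) D :
  (forall A, A \in P -> A `<=` D) -> Defs.cover P `<=` D.
Proof. by move=> H; apply/bigfcupsP => A AP _; apply: H. Qed.

Local Open Scope ereal_scope.

Lemma Enn_cst (R : realType) (mu : distr R) (c : R) :
  valid_distr mu -> Enn mu (fun _ => c) = c%:E.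
Proof.
move=> [w0 w1]; rewrite /Enn.
under eq_eseriesr do rewrite EFinM muleC.
by rewrite nneseriesZl// ?w1 ?mule1// => i _; rewrite lee_fin.
Qed.

Lemma Enn_ge0 (R : realType) (mu : distr R) h :
  valid_distr mu -> (forall m, (0 <= h m)%R) -> 0 <= Enn mu h.
Proof.
move=> [w0 _] h0; apply: nneseries_ge0 => n _ _.
by rewrite lee_fin mulr_ge0.
Qed.

Lemma Enn_le (R : realType) (mu : distr R) h g :
  valid_distr mu -> (forall m, (0 <= h m)%R) -> (forall m, (h m <= g m)%R) ->
  Enn mu h <= Enn mu g.
Proof.
move=> [w0 _] h0 hg; apply: lee_nneseries => n _.
  by move=> _; rewrite lee_fin mulr_ge0.
by rewrite lee_fin ler_wpM2l.
Qed.

Lemma Ex_nneg (R : realType) (mu : distr R) h :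
  valid_distr mu -> (forall m, (0 <= h m)%R) -> Ex mu h = Enn mu h.
Proof.
move=> v h0; rewrite /Ex.
have -> : (fun m => Num.max (h m) 0%R) = h.
  by apply/funext => m; rewrite max_l.
have -> : (fun m => Num.max (- h m)%R 0%R) = (fun _ => 0%R).
  by apply/funext => m; rewrite max_r// oppr_le0.
by rewrite Enn_cst// sube0.
Qed.

Lemma Enn_ext (R : realType) (mu : distr R) h g :
  (forall m, h m = g m) -> Enn mu h = Enn mu g.
Proof. by move=> e; congr Enn; apply/funext. Qed.

Lemma core_NA (R : realType) (mu : distr R) (Y : {fset var}) :
  valid_distr mu -> NA mu Y ->
  forall (s : seq {fset var}) (f : {fset var} -> rmem R -> R),
  uniq s -> (forall A B, A \in s -> B \in s -> A != B -> [disjoint A & B]) ->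
  (forall A, A \in s -> A `<=` Y) ->
  (forall A, A \in s -> forall m, (0 <= f A (restr A m))%R) ->
  ((forall A, A \in s -> nondecr_on A (f A)) \/
   (forall A, A \in s -> nonincr_on A (f A))) ->
  Enn mu (fun m => \prod_(A <- s) f A (restr A m))%R
    <= \prod_(A <- s) Enn mu (fun m => f A (restr A m)).
Proof.
move=> v [_ Hna]; elim=> [|A s IH] f.
  move=> _ _ _ _ _; rewrite big_nil; under Enn_ext do rewrite big_nil.
  by rewrite Enn_cst.
rewrite cons_uniq => /andP[As us] dis sub f0 mono.
set B := \bigcup_(X <- s) X.
have XB : forall X, X \in s -> X `<=` B.
  by move=> X Xs; apply: bigfcup_sup.
have sB : B `<=` Y.
  by apply/bigfcupsP => X Xs _; apply: sub; rewrite inE Xs orbT.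
have dAB : [disjoint A & B].
  apply/fdisjointP => a aA; apply/negP => /bigfcupP[X /andP[Xs _] aX].
  have AX : A != X by apply/eqP => AX; move: As; rewrite AX Xs.
  have XAs : X \in A :: s by rewrite inE Xs orbT.
  have := dis A X (mem_head _ _) XAs AX.
  by move/fdisjointP/(_ a aA); rewrite aX.
set G := fun m => (\prod_(X <- s) f X (restr X m))%R.
have GB : forall m, G (restr B m) = G m.
  move=> m; rewrite /G big_seq [in RHS]big_seq; apply: eq_bigr => X Xs.
  by rewrite restr_restr// XB.
have G0 : forall m, (0 <= G m)%R.
  move=> m; rewrite /G big_seq; apply: prodr_ge0 => X Xs.
  by apply: f0; rewrite inE Xs orbT.
have fA0 : forall m, (0 <= f A (restr A m))%R by move=> m; apply: f0; exact: mem_head.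
have sA : A `<=` Y by apply: sub; exact: mem_head.
have Gup : (forall X, X \in s -> nondecr_on X (f X)) -> nondecr_on B G.
  move=> H m m' mm'; rewrite !GB /G big_seq [X in (_ <= X)%R]big_seq.
  apply: ler_prod => X Xs; rewrite f0 ?inE ?Xs ?orbT//=.
  apply: (H X) => // x xX.
  by apply: mm'; exact: (fsubsetP (XB X Xs)).
have Gdn : (forall X, X \in s -> nonincr_on X (f X)) -> nonincr_on B G.
  move=> H m m' mm'; rewrite !GB /G big_seq [X in (_ <= X)%R]big_seq.
  apply: ler_prod => X Xs; rewrite f0 ?inE ?Xs ?orbT//=.
  apply: (H X) => // x xX.
  by apply: mm'; exact: (fsubsetP (XB X Xs)).
have mono' : (nondecr_on A (f A) /\ nondecr_on B G) \/
             (nonincr_on A (f A) /\ nonincr_on B G).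
  case: mono => H; [left|right]; (split; [apply: H; exact: mem_head|]).
    by apply: Gup => X Xs; apply: H; rewrite inE Xs orbT.
  by apply: Gdn => X Xs; apply: H; rewrite inE Xs orbT.
have := Hna A B sA sB dAB (f A) G mono'.
have bA : bdd_below_on A (f A) \/ bdd_above_on A (f A) by left; exists 0%R.
have bB : bdd_below_on B G \/ bdd_above_on B G by left; exists 0%R => m; rewrite GB.
move=> /(_ bA bB).
rewrite !Ex_nneg//; last by move=> m; rewrite GB mulr_ge0.
under Enn_ext do rewrite GB.
under [X in _ <= _ * X]Enn_ext do rewrite GB.
move=> H1; rewrite big_cons; under Enn_ext do rewrite big_cons.
apply: (le_trans H1); apply: lee_wpmul2l; first exact: Enn_ge0.
apply: IH => //.
- by move=> X Z Xs Zs; apply: dis; rewrite inE ?Xs ?Zs orbT.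
- by move=> X Xs; apply: sub; rewrite inE Xs orbT.
- by move=> X Xs; apply: f0; rewrite inE Xs orbT.
- by case: mono => H; [left|right] => X Xs; apply: H; rewrite inE Xs orbT.
Qed.

Lemma memYk (T : choiceType) (y : nat -> T) k x :
  x \in [fset y i | i in iota 0 k] <-> exists2 i, (i < k)%N & x = y i.
Proof.
split.
  by move=> /imfsetP[i /=]; rewrite mem_iota add0n => ik ->; exists i.
by move=> [i ik ->]; apply/imfsetP; exists i => //=; rewrite mem_iota add0n.
Qed.

Lemma YkS (T : choiceType) (y : nat -> T) k :
  [fset y i | i in iota 0 k.+1] = [fset y i | i in iota 0 k] `|` [fset y k].
Proof.
apply/fsetP => x; apply/idP/idP.
  move=> /memYk[i ik ->]; rewrite in_fsetU in_fset1.
  rewrite ltnS leq_eqVlt in ik; case/orP: ik => [/eqP ->|ik]; first by rewrite eqxx orbT.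
  by apply/orP; left; apply/memYk; exists i.
rewrite in_fsetU in_fset1 => /orP[/memYk[i ik ->]|/eqP ->]; apply/memYk.
  by exists i => //; apply: ltnW.
by exists k.
Qed.

Lemma Yk_mono (y : nat -> var) k l : (k <= l)%N ->
  [fset y i | i in iota 0 k] `<=` [fset y i | i in iota 0 l].
Proof.
move=> kl; apply/fsubsetP => x /memYk[i ik ->]; apply/memYk; exists i => //.
exact: leq_trans ik kl.
Qed.

Lemma partU (S T : {fset {fset var}}) D1 D2 :
  is_partition S -> is_partition T -> Defs.cover S `<=` D1 -> Defs.cover T `<=` D2 ->
  [disjoint D1 & D2] -> is_partition (S `|` T).
Proof.
move=> [S0 Sd] [T0 Td] cS cT d12; split.
  by move=> A /fsetUP[/S0|/T0].
have aux : forall A B, A \in S -> B \in T -> [disjoint A & B].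
  move=> A B AS BT; apply/fdisjointP => a aA.
  have aD1 : a \in D1 by apply: (fsubsetP cS); apply: (fsubsetP (sub_cover AS)).
  apply/negP => aB.
  have aD2 : a \in D2 by apply: (fsubsetP cT); apply: (fsubsetP (sub_cover BT)).
  by move/fdisjointP: d12 => /(_ a aD1); rewrite aD2.
move=> A B /fsetUP[AS|AT] /fsetUP[BS|BT] AB.
- exact: Sd.
- exact: aux.
- by rewrite fdisjoint_sym; apply: aux.
- exact: Td.
Qed.

Lemma PNA_of_NA (R : realType) (mu : distr R) (Y : {fset var}) :
  valid_distr mu -> NA mu Y -> forall nu : distr R,
  pt nu = pt mu -> wt nu = wt mu ->
  forall P, is_partition P -> Defs.cover P `<=` Y -> Defs.cover P `<=` ddom nu ->
  PNA nu P.
Proof.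
move=> v na nu ptE wtE P Pp cY cD; split=> //; split=> // T Tp [cT _] f f0 mono.
have EE : forall h, Enn nu h = Enn mu h by move=> h; rewrite /Enn ptE wtE.
rewrite EE; under eq_bigr => A _ do rewrite EE.
have [T0 Td] := Tp.
apply: (core_NA v na) => //.
- exact: fset_uniq.
- by move=> A AT; apply: fsubset_trans cY; rewrite -cT; apply: sub_cover.
Qed.

Lemma valid_same (R : realType) (mu nu : distr R) :
  wt nu = wt mu -> valid_distr mu -> valid_distr nu.
Proof. by move=> e; rewrite /valid_distr e. Qed.

Lemma istar_of_NA (R : realType) (mu : distr R) (K : nat) (y : nat -> var) :
  valid_distr mu ->
  (forall i j, (i < K)%N -> (j < K)%N -> y i = y j -> i = j) ->
  NA mu [fset y i | i in iota 0 K] ->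
  forall (sigma : dmem R) k, (0 < k)%N -> (k <= K)%N ->
  forall nu : distr R, pt nu = pt mu -> wt nu = wt mu ->
  [fset y i | i in iota 0 k] `<=` ddom nu ->
  istar (fun i => @sat_var R (y i)) k sigma nu.
Proof.
move=> v inj na sigma; elim=> [//|k IH] _ kK nu ptE wtE sub.
case: k IH kK sub => [|k] IH kK sub.
  right; apply: (fsubsetP sub); apply/memYk; by exists 0%N.
rewrite /=.
set mu' := Distr [fset y i | i in iota 0 k.+2] (pt mu) (wt mu).
set mu1 := Distr [fset y i | i in iota 0 k.+1] (pt mu) (wt mu).
set mu2 := Distr [fset y k.+1] (pt mu) (wt mu).
exists mu', mu1, mu2.
split; first exact: (@valid_same _ mu).
split; first exact: (@valid_same _ mu).
split; first exact: (@valid_same _ mu).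
split.
  split=> //; split=> // m; by rewrite /mass ptE wtE.
split; last first.
  split; first by apply: IH => //; apply: ltnW.
  right; rewrite /mu2 /= in_fset1 //.
have d12 : [disjoint [fset y i | i in iota 0 k.+1] & [fset y k.+1]].
  apply/fdisjointP => x /memYk[i ik ->]; rewrite in_fset1; apply/negP => /eqP e.
  have := inj _ _ (leq_trans ik (ltnW kK)) kK e.
  by move=> ie; rewrite ie ltnn in ik.
rewrite /in_oplus; split; first exact: d12.
split; first exact: YkS.
split; first by split.
split; first by split.
move=> S T Sp cS Tp cT _ _.
apply: (PNA_of_NA v na) => //.
- exact: (partU Sp Tp cS cT d12).
- apply: cover_sub => A /fsetUP[AS|AT].
    apply: fsubset_trans (sub_cover AS) _; apply: fsubset_trans cS _.
    by apply: Yk_mono; apply: ltnW.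
  apply: fsubset_trans (sub_cover AT) _; apply: fsubset_trans cT _.
  by apply/fsubsetP => x; rewrite in_fset1 => /eqP ->; apply/memYk; exists k.+1.
- rewrite (_ : ddom mu' = [fset y i | i in iota 0 k.+1] `|` [fset y k.+1]); last exact: YkS.
  apply: cover_sub => A /fsetUP[AS|AT].
    by apply: fsubset_trans (sub_cover AS) _; apply: fsubset_trans cS _; apply: fsubsetUl.
  by apply: fsubset_trans (sub_cover AT) _; apply: fsubset_trans cT _; apply: fsubsetUr.
Qed.

Lemma fwd (R : realType) (mu : distr R) (K : nat) (y : nat -> var) :
  valid_distr mu -> (0 < K)%N ->
  (forall i j, (i < K)%N -> (j < K)%N -> y i = y j -> i = j) ->
  NA mu [fset y i | i in iota 0 K] ->
  forall sigma : dmem R, istar (fun i => @sat_var R (y i)) K sigma mu.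
Proof.
move=> v K0 inj na sigma; apply: (istar_of_NA v inj na) => //.
by case: na.
Qed.

Lemma cover1 (x : var) : Defs.cover [fset [fset x]] = [fset x].
Proof. by rewrite /Defs.cover big_seq_fset1. Qed.

Lemma PNA_single (R : realType) (nu : distr R) (x : var) :
  x \in ddom nu -> PNA nu [fset [fset x]].
Proof.
move=> xd; split.
  split.
    by move=> A; rewrite in_fset1 => /eqP ->; apply/eqP => /fsetP/(_ x); rewrite !inE eqxx.
  by move=> A B; rewrite !in_fset1 => /eqP -> /eqP ->; rewrite eqxx.
split.
  by rewrite cover1; apply/fsubsetP => z; rewrite in_fset1 => /eqP ->.
move=> T [T0 _] [cT _] f _ _.
have memT : forall X, X \in T -> X = [fset x].
  move=> X XT; have := sub_cover XT; rewrite cT cover1 fsubset1 => /orP[/eqP //|/eqP X0].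
  by move: (T0 X XT); rewrite X0 eqxx.
have Teq : T = [fset [fset x]].
  apply/fsetP => X; rewrite in_fset1; apply/idP/idP => [/memT ->//|/eqP ->].
  have : x \in Defs.cover T by rewrite cT cover1 in_fset1.
  by move=> /bigfcupP[Z /andP[ZT _] _]; rewrite -(memT Z ZT).
rewrite Teq big_seq_fset1; under Enn_ext do rewrite big_seq_fset1.
by [].
Qed.

Lemma asbool_sym (R : realType) (a b : rmem R) : `[< a = b >] = `[< b = a >].
Proof. by apply/idP/idP => /asboolP e; apply/asboolP; rewrite e. Qed.

Lemma series_ge_term (R : realType) (u : nat -> \bar R) n :
  (forall i, 0 <= u i) -> u n <= \sum_(0 <= i <oo) u i.
Proof.
move=> u0; apply: le_trans (nneseries_lim_ge n.+1 (fun i _ _ => u0 i)).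
rewrite big_nat_recr//= -[X in X <= _]add0e; apply: leeD => //.
by apply: sume_ge0 => i _; exact: u0.
Qed.

Lemma mass_ge (R : realType) (mu : distr R) D m n :
  valid_distr mu -> restr D (pt mu n) = restr D m -> (wt mu n)%:E <= mass mu D m.
Proof.
move=> [w0 _] e; rewrite /mass.
have := @series_ge_term R (fun i => (wt mu i * (`[< restr D (pt mu i) = restr D m >])%:R)%:E) n.
rewrite (asboolT e) mulr1; apply => i.
by rewrite lee_fin mulr_ge0.
Qed.

Lemma mass_bnd (R : realType) (mu : distr R) D m :
  valid_distr mu -> 0 <= mass mu D m <= 1.
Proof.
move=> [w0 w1]; apply/andP; split.
  by apply: nneseries_ge0 => i _ _; rewrite lee_fin mulr_ge0.
rewrite -w1; apply: lee_nneseries => i _.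
  by move=> _; rewrite lee_fin mulr_ge0.
rewrite lee_fin ler_piMr//; by case: asboolP.
Qed.

Lemma mass_fin (R : realType) (mu : distr R) D m :
  valid_distr mu -> mass mu D m \is a fin_num.
Proof.
move=> v; have /andP[m0 m1] := mass_bnd D m v.
by rewrite ge0_fin_numE// (le_lt_trans m1)// ltey.
Qed.

Lemma mass_restr (R : realType) (mu : distr R) D m1 m2 :
  restr D m1 = restr D m2 -> mass mu D m1 = mass mu D m2.
Proof. by move=> e; rewrite /mass e. Qed.

Lemma Enn_marg (R : realType) (nu mu' : distr R) (D : {fset var}) (h : rmem R -> R) :
  valid_distr nu -> valid_distr mu' -> (forall m, mass nu D m = mass mu' D m) ->
  (forall m, (0 <= h m)%R) -> (forall m, h (restr D m) = h m) ->
  Enn nu h = Enn mu' h.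
Proof.
move=> vn vm me h0 hD.
have [w0 _] := vn; have [w0' _] := vm.
pose ind (a b : rmem R) : R := (`[< restr D a = restr D b >])%:R.
have ind0 : forall a b, (0 <= ind a b)%R by move=> a b; rewrite /ind; case: asboolP.
pose al m := fine (mass nu D m).
have alE : forall m, (al m)%:E = mass nu D m by move=> m; rewrite fineK// mass_fin.
have al0 : forall m, (0 <= al m)%R.
  by move=> m; rewrite -lee_fin alE; have /andP[] := mass_bnd D m vn.
pose t n k := (wt nu n * wt mu' k * ind (pt nu n) (pt mu' k) *
               (h (pt nu n) / al (pt nu n)))%:E.
have t0 : forall n k, 0 <= t n k.
  move=> n k; by rewrite lee_fin !mulr_ge0 ?invr_ge0.
have L : forall n, \sum_(0 <= k <oo) t n k = (wt nu n * h (pt nu n))%:E.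
  move=> n.
  have -> : t n = (fun k => (wt nu n * (h (pt nu n) / al (pt nu n)))%:E *
       (wt mu' k * (`[< restr D (pt mu' k) = restr D (pt nu n) >])%:R)%:E).
    apply/funext => k; rewrite /t /ind asbool_sym -EFinM; congr EFin.
    by ring.
  rewrite nneseriesZl; last by move=> k _; rewrite lee_fin mulr_ge0//; case: asboolP.
  rewrite -/(mass mu' D (pt nu n)) -me -alE -EFinM; congr EFin.
  have [a0|an0] := eqVneq (al (pt nu n)) 0%R.
    have : (wt nu n <= 0)%R.
      by rewrite -lee_fin -a0 alE; apply: mass_ge.
    move=> wle; have -> : wt nu n = 0%R by apply/eqP; rewrite eq_le wle w0.
    by rewrite !mul0r.
  by rewrite -mulrA mulfVK.
have Rt : forall k, \sum_(0 <= n <oo) t n k = (wt mu' k * h (pt mu' k))%:E.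
  move=> k.
  have tE : forall n, t n k = (wt mu' k * (h (pt mu' k) / al (pt mu' k)))%:E *
       (wt nu n * (`[< restr D (pt nu n) = restr D (pt mu' k) >])%:R)%:E.
    move=> n; rewrite /t /ind -EFinM; congr EFin.
    case: asboolP => e; last by rewrite !mulr0 mul0r.
    rewrite -[h (pt nu n)]hD e hD /al (mass_restr nu e).
    by ring.
  under eq_eseriesr => n _ do rewrite tE.
  rewrite nneseriesZl; last by move=> n _; rewrite lee_fin mulr_ge0//; case: asboolP.
  rewrite -/(mass nu D (pt mu' k)) -alE -EFinM; congr EFin.
  have [a0|an0] := eqVneq (al (pt mu' k)) 0%R.
    have : (wt mu' k <= 0)%R.
      by rewrite -lee_fin -a0 alE me; apply: mass_ge.
    move=> wle; have -> : wt mu' k = 0%R by apply/eqP; rewrite eq_le wle w0'.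
    by rewrite !mul0r.
  by rewrite -mulrA mulfVK.
rewrite /Enn.
transitivity (\sum_(0 <= n <oo) \sum_(0 <= k <oo) t n k).
  by apply: eq_eseriesr => n _; rewrite L.
rewrite (nneseries_interchange xpredT xpredT t0).
by apply: eq_eseriesr => k _; rewrite Rt.
Qed.

Lemma PNA_transfer (R : realType) (nu mu' : distr R) S :
  valid_distr nu -> valid_distr mu' -> dsub mu' nu -> PNA mu' S -> PNA nu S.
Proof.
move=> vn vm [sub [_ me]] [Sp [cS H]]; split=> //; split.
  exact: fsubset_trans cS sub.
move=> T Tp cTS f f0 mono.
have TD : forall A, A \in T -> A `<=` ddom mu'.
  by move=> A AT; apply: fsubset_trans cS; case: cTS => <- _; apply: sub_cover.
have E1 : Enn nu (fun m => \prod_(A <- T) f A (restr A m))%R =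
          Enn mu' (fun m => \prod_(A <- T) f A (restr A m))%R.
  apply: (Enn_marg vn vm me).
    by move=> m; rewrite big_seq; apply: prodr_ge0 => A AT; apply: f0.
  move=> m; rewrite big_seq [in RHS]big_seq; apply: eq_bigr => A AT.
  by rewrite restr_restr// TD.
have E2 : \prod_(A <- T) Enn nu (fun m => f A (restr A m)) =
          \prod_(A <- T) Enn mu' (fun m => f A (restr A m)).
  rewrite big_seq [in RHS]big_seq; apply: eq_bigr => A AT.
  apply: (Enn_marg vn vm me); first by move=> m; apply: f0.
  by move=> m; rewrite restr_restr// TD.
by rewrite E1 E2; apply: H.
Qed.

Lemma PNA_of_istar (R : realType) (y : nat -> var) :
  forall k (nu : distr R), (0 < k)%N -> valid_distr nu ->
  istar (fun i => @sat_var R (y i)) k (DMem fset0 (fun _ => 0%R)) nu ->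
  PNA nu [fset [fset y i] | i in iota 0 k].
Proof.
elim=> [//|k IH] nu _ vn.
case: k IH => [|k] IH.
  rewrite /= /sat_var /= in_fset0 => -[//|yd].
  suff -> : [fset [fset y i] | i in iota 0 1] = [fset [fset y 0%N]] by apply: PNA_single.
  apply/fsetP => X; rewrite in_fset1; apply/idP/idP.
    by move=> /imfsetP[i]; rewrite /= inE => /eqP -> ->.
  by move=> /eqP ->; apply/imfsetP; exists 0%N.
move=> [mu' [mu1 [mu2 [vm' [v1 [v2 [ds [io [i1 s2]]]]]]]]].
have P1 := IH mu1 isT v1 i1.
have P2 : PNA mu2 [fset [fset y k.+1]].
  by apply: PNA_single; case: s2 => //=; rewrite in_fset0.
have [_ [_ [_ [_ Hp]]]] := io.
have := Hp _ _ P1.1 P1.2.1 P2.1 P2.2.1 P1 P2.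
rewrite -YkS => P'.
exact: (PNA_transfer vn vm' ds P').
Qed.

Lemma Enn_scale (R : realType) (mu : distr R) (c : R) h :
  valid_distr mu -> (forall m, (0 <= h m)%R) ->
  Enn mu (fun m => c * h m)%R = c%:E * Enn mu h.
Proof.
move=> [w0 _] h0; rewrite /Enn -nneseriesZl; last by move=> i _; rewrite lee_fin mulr_ge0.
by apply: eq_eseriesr => i _; rewrite -EFinM; congr EFin; ring.
Qed.

Lemma basicB (R : realType) (mu : distr R) (Sg : {fset {fset var}}) (Y : {fset var}) :
  valid_distr mu -> PNA mu Sg -> Defs.cover Sg = Y ->
  (forall X, X `<=` Y -> exists F, F `<=` Sg /\ X = Defs.cover F) ->
  forall A B, A `<=` Y -> B `<=` Y -> [disjoint A & B] ->
  forall phi psi : rmem R -> R,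
  (forall m, (0 <= phi (restr A m))%R) -> (forall m, (0 <= psi (restr B m))%R) ->
  ((nondecr_on A phi /\ nondecr_on B psi) \/ (nonincr_on A phi /\ nonincr_on B psi)) ->
  Enn mu (fun m => phi (restr A m) * psi (restr B m))%R
    <= Enn mu (fun m => phi (restr A m)) * Enn mu (fun m => psi (restr B m)).
Proof.
move=> v [_ [_ H]] cSg Fex A B AY BY dAB phi psi phi0 psi0 mono.
have [A0|An0] := eqVneq A fset0.
  subst A; set c := phi (restr fset0 (fun _ => 0%R)).
  have cE : forall m, phi (restr fset0 m) = c by move=> m; rewrite /c (restr0 m (fun _ => 0%R)).
  rewrite Enn_scale// Enn_cst//.
have [B0|Bn0] := eqVneq B fset0.
  subst B; set c := psi (restr fset0 (fun _ => 0%R)).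
  have cE : forall m, psi (restr fset0 m) = c by move=> m; rewrite /c (restr0 m (fun _ => 0%R)).
  under Enn_ext do rewrite mulrC.
  by rewrite Enn_scale// Enn_cst// muleC.
have [a aA] : exists a, a \in A.
  by case: (fset_0Vmem A) An0 => [->|[a aA] _]; [rewrite eqxx|exists a].
have [b bB] : exists b, b \in B.
  by case: (fset_0Vmem B) Bn0 => [->|[b bB] _]; [rewrite eqxx|exists b].
set C := Y `\` A.
have BC : B `<=` C.
  apply/fsubsetP => x xB; rewrite in_fsetD (fsubsetP BY)// andbT.
  by apply/negP => xA; move/fdisjointP: dAB => /(_ x xA); rewrite xB.
have nAC : A != C.
  apply/eqP => e; have : a \in C by rewrite -e.
  by rewrite in_fsetD aA.
have dAC : [disjoint A & C].
  by apply/fdisjointP => x xA; rewrite in_fsetD xA.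
set T := A |` [fset C].
set f := fun X => if X == A then phi else (fun m => psi (restr B m)).
have fC : f C = (fun m => psi (restr B m)) by rewrite /f eq_sym (negbTE nAC).
have fA : f A = phi by rewrite /f eqxx.
have memT : forall X, X \in T -> X = A \/ X = C.
  by move=> X; rewrite in_fset1U in_fset1 => /orP[/eqP|/eqP]; [left|right].
have Tp : is_partition T.
  split.
    move=> X /memT[->|->] //; apply/eqP => /fsetP/(_ b).
    by rewrite (fsubsetP BC)// in_fset0.
  move=> X Z /memT[->|->] /memT[->|->]; rewrite ?eqxx // => _.
  by rewrite fdisjoint_sym.
have cT : Defs.cover T = Y.
  apply/fsetP => x; apply/bigfcupP/idP.
    move=> [X /andP[/memT[->|->] _] xX]; first exact: (fsubsetP AY).
    by move: xX; rewrite in_fsetD => /andP[].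
  move=> xY; case: (boolP (x \in A)) => xA.
    by exists A => //; rewrite fsetU11.
  exists C; last by rewrite in_fsetD xA xY.
  by rewrite in_fset1U in_fset1 eqxx orbT.
have coT : coarsens T Sg.
  split; first by rewrite cT cSg.
  move=> X /memT[->|->]; apply: Fex => //.
  by apply/fsubsetP => x; rewrite in_fsetD => /andP[].
have f0 : forall X, X \in T -> forall m, (0 <= f X (restr X m))%R.
  move=> X /memT[->|->] m; first by rewrite fA.
  by rewrite fC /= restr_restr.
have monoT : (forall X, X \in T -> nondecr_on X (f X)) \/
             (forall X, X \in T -> nonincr_on X (f X)).
  case: mono => [[m1 m2]|[m1 m2]]; [left|right] => X /memT[->|->]; rewrite ?fA ?fC //.
    move=> m m' mm'; rewrite !restr_restr//; apply: m2 => x xB.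
    by apply: mm'; exact: (fsubsetP BC).
  move=> m m' mm'; rewrite !restr_restr//; apply: m2 => x xB.
  by apply: mm'; exact: (fsubsetP BC).
have := H T Tp coT f f0 monoT.
have nAT : A \notin [fset C] by rewrite in_fset1.
rewrite big_fsetU1// big_seq_fset1 fA fC.
under Enn_ext do rewrite big_fsetU1// big_seq_fset1 fA fC.
move=> HH; apply: le_trans (le_trans HH _).
  by rewrite le_eqVlt; apply/orP; left; apply/eqP; apply: Enn_ext => m /=; rewrite restr_restr.
rewrite le_eqVlt; apply/orP; left; apply/eqP => /=; congr (_ * _); apply: Enn_ext => m; by rewrite restr_restr.
Qed.

Lemma nneseries_ub (R : realType) (u : nat -> \bar R) (C : \bar R) :
  (forall i, 0 <= u i) -> (forall k, \sum_(0 <= i < k) u i <= C) ->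
  \sum_(0 <= i <oo) u i <= C.
Proof.
move=> u0 H.
have nd : nondecreasing_seq (fun n => \sum_(0 <= i < n) u i).
  by apply: (@ereal_nondecreasing_series _ u xpredT 0) => n _ _; exact: u0.
rewrite (cvg_lim _ (ereal_nondecreasing_cvgn nd))//.
by apply: ub_ereal_sup => _ [k _ <-]; exact: H.
Qed.

Lemma supprod (R : realType) (a b : nat -> R) (C : \bar R) :
  (forall i, (0 <= a i)%R) -> (forall i, (0 <= b i)%R) ->
  (forall k1 k2, (\sum_(0 <= i < k1) (a i)%:E) * (\sum_(0 <= i < k2) (b i)%:E) <= C) ->
  (\sum_(0 <= i <oo) (a i)%:E) * (\sum_(0 <= i <oo) (b i)%:E) <= C.
Proof.
move=> a0 b0 H.
have Pa0 : forall k, 0 <= \sum_(0 <= i < k) (a i)%:E by move=> k; apply: sume_ge0 => i _; rewrite lee_fin.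
have Pb0 : forall k, 0 <= \sum_(0 <= i < k) (b i)%:E by move=> k; apply: sume_ge0 => i _; rewrite lee_fin.
have C0 : 0 <= C by apply: le_trans (H 0%N 0%N); rewrite !big_geq// mule0.
have S1 : forall k1, (\sum_(0 <= i < k1) (a i)%:E) * (\sum_(0 <= i <oo) (b i)%:E) <= C.
  move=> k1; rewrite sumEFin -nneseriesZl; last by move=> i _; rewrite lee_fin.
  apply: nneseries_ub; first by move=> i; rewrite -EFinM lee_fin mulr_ge0// sumr_ge0.
  move=> k2; rewrite -ge0_sume_distrr; last by move=> i _; rewrite lee_fin.
  by rewrite -sumEFin; apply: H.
have Sb0 : 0 <= \sum_(0 <= i <oo) (b i)%:E.
  by apply: nneseries_ge0 => i _ _; rewrite lee_fin.
move: Sb0 S1; case: (\sum_(0 <= i <oo) (b i)%:E) => [y| |] y0 S1; last by move: y0; rewrite leeNy_eq.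
  rewrite muleC -nneseriesZl; last by move=> i _; rewrite lee_fin.
  apply: nneseries_ub; first by move=> i; rewrite lee_fin mulr_ge0.
  move=> k; rewrite -ge0_sume_distrr; last by move=> i _; rewrite lee_fin.
  by rewrite muleC; exact: S1.
case: C C0 H S1 => [c| |] C0 H S1; [|by rewrite leey|by move: C0; rewrite leeNy_eq].
have Pz : forall k, \sum_(0 <= i < k) (a i)%:E = 0.
  move=> k; have := S1 k; have := Pa0 k; rewrite le_eqVlt => /orP[/eqP <-//|Pk].
  by rewrite gt0_muley.
have -> : \sum_(0 <= i <oo) (a i)%:E = 0.
  apply/eqP; rewrite eq_le; apply/andP; split.
    by apply: nneseries_ub => [i|k]; rewrite ?lee_fin ?Pz.
  by apply: nneseries_ge0 => i _ _; rewrite lee_fin.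
by rewrite mul0e.
Qed.

Lemma Enn_add (R : realType) (mu : distr R) u v :
  valid_distr mu -> (forall m, (0 <= u m)%R) -> (forall m, (0 <= v m)%R) ->
  Enn mu (fun m => u m + v m)%R = Enn mu u + Enn mu v.
Proof.
move=> [w0 _] u0 v0; rewrite /Enn -nneseriesD.
- by apply: eq_eseriesr => i _; rewrite -EFinD mulrDr.
- by move=> i _ _; rewrite lee_fin mulr_ge0.
- by move=> i _ _; rewrite lee_fin mulr_ge0.
Qed.

Lemma fin_bnd (R : realType) (X : \bar R) (d : R) : 0 <= X -> X <= d%:E -> X = (fine X)%:E.
Proof.
by move=> X0 Xd; rewrite fineK// ge0_fin_numE// (le_lt_trans Xd)// ltry.
Qed.

Lemma Enn_bnd (R : realType) (mu : distr R) h (d : R) :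
  valid_distr mu -> (forall m, (0 <= h m <= d)%R) -> Enn mu h = (fine (Enn mu h))%:E.
Proof.
move=> v hd; apply: (@fin_bnd _ _ d).
  by apply: Enn_ge0 => // m; case/andP: (hd m).
by rewrite -(@Enn_cst _ mu d v); apply: Enn_le => // m; case/andP: (hd m).
Qed.

Lemma mixedMb (R : realType) (mu : distr R) (Sg : {fset {fset var}}) (Y : {fset var}) :
  valid_distr mu -> PNA mu Sg -> Defs.cover Sg = Y ->
  (forall X, X `<=` Y -> exists F, F `<=` Sg /\ X = Defs.cover F) ->
  forall A B, A `<=` Y -> B `<=` Y -> [disjoint A & B] ->
  forall (phi psi : rmem R -> R) (c : R),
  (forall m, (0 <= phi (restr A m) <= c)%R) -> (forall m, (0 <= psi (restr B m) <= c)%R) ->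
  ((nondecr_on A phi /\ nonincr_on B psi) \/ (nonincr_on A phi /\ nondecr_on B psi)) ->
  Enn mu (fun m => phi (restr A m)) * Enn mu (fun m => psi (restr B m))
    <= Enn mu (fun m => phi (restr A m) * psi (restr B m))%R.
Proof.
move=> v pna cSg Fex A B AY BY dAB phi psi c phic psic mono.
have c0 : (0 <= c)%R by case/andP: (phic (fun _ => 0%R)) => /le_trans; apply.
set h := fun m => (c - psi m)%R.
have hB : forall m, (0 <= h (restr B m) <= c)%R.
  move=> m; rewrite /h; case/andP: (psic m) => p0 pc.
  by rewrite subr_ge0 pc /= lerBlDr lerDl.
have I1 := basicB v pna cSg Fex AY BY dAB (phi:=phi) (psi:=h)
  (fun m => proj1 (andP (phic m))) (fun m => proj1 (andP (hB m))).
have I2 : Enn mu (fun m => phi (restr A m) * h (restr B m))%R <=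
          Enn mu (fun m => phi (restr A m)) * Enn mu (fun m => h (restr B m)).
  apply: I1; case: mono => [[m1 m2]|[m1 m2]]; [left|right]; split => //.
    by move=> m m' mm'; rewrite /h lerB// m2.
  by move=> m m' mm'; rewrite /h lerB// m2.
have E1 : Enn mu (fun m => phi (restr A m) * h (restr B m))%R +
          Enn mu (fun m => phi (restr A m) * psi (restr B m))%R =
          c%:E * Enn mu (fun m => phi (restr A m)).
  rewrite -Enn_add//; last 2 first.
  - by move=> m; case/andP: (phic m) => ? _; case/andP: (hB m) => ? _; rewrite mulr_ge0.
  - by move=> m; case/andP: (phic m) => ? _; case/andP: (psic m) => ? _; rewrite mulr_ge0.
  rewrite -Enn_scale//; last by move=> m; case/andP: (phic m).
  by apply: Enn_ext => m; rewrite /h; ring.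
have E2 : Enn mu (fun m => h (restr B m)) + Enn mu (fun m => psi (restr B m)) = c%:E.
  rewrite -Enn_add//; last 2 first.
  - by move=> m; case/andP: (hB m).
  - by move=> m; case/andP: (psic m).
  by rewrite -(@Enn_cst _ mu c v); apply: Enn_ext => m; rewrite /h; ring.
have b1 := @Enn_bnd R mu _ c v phic.
have b2 := @Enn_bnd R mu _ c v psic.
have b3 := @Enn_bnd R mu _ c v hB.
have b4 : Enn mu (fun m => phi (restr A m) * h (restr B m))%R =
  (fine (Enn mu (fun m => phi (restr A m) * h (restr B m))%R))%:E.
  apply: (@Enn_bnd R mu _ (c * c)) => // m.
  case/andP: (phic m) => ? ?; case/andP: (hB m) => ? ?.
  by rewrite mulr_ge0//= ler_pM.
have b5 : Enn mu (fun m => phi (restr A m) * psi (restr B m))%R =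
  (fine (Enn mu (fun m => phi (restr A m) * psi (restr B m))%R))%:E.
  apply: (@Enn_bnd R mu _ (c * c)) => // m.
  case/andP: (phic m) => ? ?; case/andP: (psic m) => ? ?.
  by rewrite mulr_ge0//= ler_pM.
move: I2 E1 E2; rewrite b1 b2 b3 b4 b5.
set P := fine _; set Q := fine _; set H := fine _; set X := fine _; set Z := fine _.
rewrite -!EFinM -!EFinD !lee_fin => I2 /eqP; rewrite eqe => /eqP E1 /eqP; rewrite eqe => /eqP E2.
have Q0 : (0 <= Q)%R by rewrite /Q fine_ge0// Enn_ge0// => m; case/andP: (phic m).
nra.
Qed.

Lemma min_mono (R : realType) (x y c : R) : (x <= y)%R -> (Num.min x c <= Num.min y c)%R.
Proof. by move=> xy; rewrite le_min !ge_min xy lexx orbT. Qed.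

Lemma term_le_sum (R : realType) (F : nat -> R) k i :
  (forall j, (0 <= F j)%R) -> (i < k)%N -> (F i <= \sum_(0 <= j < k) F j)%R.
Proof.
move=> F0 ik; rewrite big_mkord (bigD1 (Ordinal ik)) //= lerDl.
by apply: sumr_ge0 => j _.
Qed.

Lemma mixedM (R : realType) (mu : distr R) (Sg : {fset {fset var}}) (Y : {fset var}) :
  valid_distr mu -> PNA mu Sg -> Defs.cover Sg = Y ->
  (forall X, X `<=` Y -> exists F, F `<=` Sg /\ X = Defs.cover F) ->
  forall A B, A `<=` Y -> B `<=` Y -> [disjoint A & B] ->
  forall (phi psi : rmem R -> R),
  (forall m, (0 <= phi (restr A m))%R) -> (forall m, (0 <= psi (restr B m))%R) ->
  ((nondecr_on A phi /\ nonincr_on B psi) \/ (nonincr_on A phi /\ nondecr_on B psi)) ->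
  Enn mu (fun m => phi (restr A m)) * Enn mu (fun m => psi (restr B m))
    <= Enn mu (fun m => phi (restr A m) * psi (restr B m))%R.
Proof.
move=> v pna cSg Fex A B AY BY dAB phi psi phi0 psi0 mono.
have [w0 _] := v.
rewrite /Enn -/(Enn mu _).
apply: supprod; [by move=> i; rewrite mulr_ge0|by move=> i; rewrite mulr_ge0|].
move=> k1 k2.
set c := (\sum_(0 <= i < k1) phi (restr A (pt mu i)) + \sum_(0 <= i < k2) psi (restr B (pt mu i)))%R.
have c0 : (0 <= c)%R by rewrite addr_ge0// sumr_ge0.
have phic1 : forall i, (i < k1)%N -> (phi (restr A (pt mu i)) <= c)%R.
  move=> i ik; apply: le_trans (@term_le_sum _ (fun j => phi (restr A (pt mu j))) k1 i (fun j => phi0 _) ik) _.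
  by rewrite lerDl sumr_ge0.
have psic1 : forall i, (i < k2)%N -> (psi (restr B (pt mu i)) <= c)%R.
  move=> i ik; apply: le_trans (@term_le_sum _ (fun j => psi (restr B (pt mu j))) k2 i (fun j => psi0 _) ik) _.
  by rewrite lerDr sumr_ge0.
set phc := fun m => Num.min (phi m) c.
set psc := fun m => Num.min (psi m) c.
have phcb : forall m, (0 <= phc (restr A m) <= c)%R.
  by move=> m; rewrite /phc le_min phi0 c0 ge_min lexx orbT.
have pscb : forall m, (0 <= psc (restr B m) <= c)%R.
  by move=> m; rewrite /psc le_min psi0 c0 ge_min lexx orbT.
have monoc : (nondecr_on A phc /\ nonincr_on B psc) \/ (nonincr_on A phc /\ nondecr_on B psc).
  case: mono => [[m1 m2]|[m1 m2]]; [left|right]; split => m m' mm'; apply: min_mono;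
    [exact: m1|exact: m2|exact: m1|exact: m2].
have Hb := mixedMb v pna cSg Fex AY BY dAB phcb pscb monoc.
apply: le_trans (le_trans Hb _).
  apply: lee_pmul.
  - by apply: sume_ge0 => i _; rewrite lee_fin mulr_ge0.
  - by apply: sume_ge0 => i _; rewrite lee_fin mulr_ge0.
  - apply: le_trans (nneseries_lim_ge k1 _); last first.
      by move=> i _ _; rewrite lee_fin mulr_ge0// (andP (phcb _)).1.
    rewrite big_nat_cond [X in _ <= X]big_nat_cond; apply: lee_sum => i /andP[/andP[_ ik] _].
    by rewrite /phc min_l// phic1.
  - apply: le_trans (nneseries_lim_ge k2 _); last first.
      by move=> i _ _; rewrite lee_fin mulr_ge0// (andP (pscb _)).1.
    rewrite big_nat_cond [X in _ <= X]big_nat_cond; apply: lee_sum => i /andP[/andP[_ ik] _].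
    by rewrite /psc min_l// psic1.
rewrite -/(Enn mu (fun m => (phi (restr A m) * psi (restr B m))%R)).
apply: Enn_le => //.
  by move=> m; rewrite mulr_ge0// ?(andP (phcb _)).1 ?(andP (pscb _)).1.
move=> m; apply: ler_pM; rewrite ?(andP (phcb _)).1 ?(andP (pscb _)).1//.
  by rewrite /phc ge_min lexx.
by rewrite /psc ge_min lexx.
Qed.

Lemma core_inf (R : realType) (a2 b1 b2 : \bar R) :
  a2 \is a fin_num -> 0 <= a2 -> 0 <= b1 -> 0 <= b2 ->
  +oo * b1 + a2 * b2 - (+oo * b2 + a2 * b1) <= (+oo - a2) * (b1 - b2).
Proof.
move=> a2f a20 b10 b20.
have a2b1 : a2 * b1 != -oo.
  by rewrite gt_eqF// (lt_le_trans _ (mule_ge0 a20 b10))// ltNy0.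
have [b2p|b2z] : 0 < b2 \/ b2 = 0.
  by move: b20; rewrite le_eqVlt => /orP[/eqP ->|]; [right|left].
  by rewrite (gt0_mulye b2p) (addye a2b1) addeNy leNye.
subst b2; rewrite !mule0 sube0 add0e adde0.
have -> : +oo - a2 = +oo.
  by apply: addye; rewrite eqe_oppLR /=; move: a2f; rewrite fin_numE => /andP[].
have [b1p|b1z] : 0 < b1 \/ b1 = 0.
  by move: b10; rewrite le_eqVlt => /orP[/eqP ->|]; [right|left].
  by rewrite gt0_mulye// leey.
by subst b1; rewrite !mule0 subee.
Qed.

Definition Fst (R : realType) (a1 a2 b1 b2 : \bar R) :=
  a1 * b1 + a2 * b2 - (a1 * b2 + a2 * b1) <= (a1 - a2) * (b1 - b2).

Lemma Fst_swapab (R : realType) (a1 a2 b1 b2 : \bar R) :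
  Fst b1 b2 a1 a2 -> Fst a1 a2 b1 b2.
Proof.
rewrite /Fst (muleC b1 a1) (muleC b2 a2) (muleC b1 a2) (muleC b2 a1) (addeC (a2 * b1)).
by rewrite (muleC (b1 - b2)).
Qed.

Lemma subeC_neg (R : realType) (u v : \bar R) :
  0 <= u -> 0 <= v -> (u \is a fin_num \/ v \is a fin_num) -> v - u = - (u - v).
Proof.
move=> u0 v0 uv; rewrite oppeB; first by rewrite addeC.
rewrite /adde_def; apply/andP; split.
  rewrite negb_and; case: uv => [uf|vf]; apply/orP; [left|right].
  - by move: uf; rewrite fin_numE => /andP[].
  - by rewrite eqe_oppLR /=; move: vf; rewrite fin_numE => /andP[].
rewrite negb_and; apply/orP; left; apply/negP => /eqP u_ny.
by move: u0; rewrite u_ny leeNy_eq.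
Qed.

Lemma Fst_swap12 (R : realType) (a1 a2 b1 b2 : \bar R) :
  0 <= a1 -> 0 <= a2 -> 0 <= b1 -> 0 <= b2 ->
  (a1 \is a fin_num \/ a2 \is a fin_num) -> (b1 \is a fin_num \/ b2 \is a fin_num) ->
  Fst a2 a1 b2 b1 -> Fst a1 a2 b1 b2.
Proof.
move=> a10 a20 b10 b20 af bf; rewrite /Fst.
rewrite (subeC_neg a10 a20 af) (subeC_neg b10 b20 bf) muleNN.
by rewrite (addeC (a2 * b2)) (addeC (a2 * b1)).
Qed.

Lemma nn_cases (R : realType) (x : \bar R) : 0 <= x -> x = +oo \/ x \is a fin_num.
Proof.
case: x => [r| |] x0; [by right|by left|by move: x0; rewrite leeNy_eq].
Qed.

Lemma earith (R : realType) (a1 a2 b1 b2 : \bar R) :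
  0 <= a1 -> 0 <= a2 -> 0 <= b1 -> 0 <= b2 ->
  (a1 \is a fin_num \/ a2 \is a fin_num) -> (b1 \is a fin_num \/ b2 \is a fin_num) ->
  Fst a1 a2 b1 b2.
Proof.
move=> a10 a20 b10 b20 af bf.
have fy : forall x : \bar R, x = +oo -> x \is a fin_num -> False by move=> x ->.
case: (nn_cases a10) => [a1y|a1f].
  have a2f : a2 \is a fin_num by case: af => // a1f; move: a1f; rewrite a1y.
  by rewrite a1y; apply: core_inf.
case: (nn_cases a20) => [a2y|a2f].
  apply: Fst_swap12 => //; rewrite a2y; exact: core_inf.
case: (nn_cases b10) => [b1y|b1f].
  have b2f : b2 \is a fin_num by case: bf => // b1f; move: b1f; rewrite b1y.
  by apply: Fst_swapab; rewrite b1y; apply: core_inf.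
case: (nn_cases b20) => [b2y|b2f].
  apply: Fst_swapab; apply: Fst_swap12 => //; try by left.
  by rewrite b2y; apply: core_inf.
rewrite /Fst -(fineK a1f) -(fineK a2f) -(fineK b1f) -(fineK b2f).
rewrite -!EFinM -!EFinD lee_fin.
by rewrite le_eqVlt; apply/orP; left; apply/eqP; ring.
Qed.

Lemma maxmul (R : realType) (x y : R) :
  (Num.max (x * y) 0 = Num.max x 0 * Num.max y 0 + Num.max (- x) 0 * Num.max (- y) 0 /\
   Num.max (- (x * y)) 0 = Num.max x 0 * Num.max (- y) 0 + Num.max (- x) 0 * Num.max y 0)%R.
Proof.
have p1 : forall z : R, (0 <= z)%R -> (Num.max z 0 = z /\ Num.max (- z) 0 = 0)%R.
  by move=> z z0; rewrite max_l// max_r// oppr_le0.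
have p3 : forall z : R, (z <= 0)%R -> (Num.max z 0 = 0 /\ Num.max (- z) 0 = - z)%R.
  by move=> z z0; rewrite max_r// max_l// oppr_ge0.
have [hx|hx] : (0 <= x \/ x <= 0)%R by case: (lerP 0 x) => h; [left|right; apply: ltW].
all: have [hy|hy] : (0 <= y \/ y <= 0)%R by case: (lerP 0 y) => h; [left|right; apply: ltW].
- have [e1 e2] := p1 _ hx; have [e3 e4] := p1 _ hy.
  have [e5 e6] := p1 (x * y)%R (mulr_ge0 hx hy).
  by rewrite e1 e2 e3 e4 e5 e6; split; ring.
- have [e1 e2] := p1 _ hx; have [e3 e4] := p3 _ hy.
  have [e5 e6] := p3 (x * y)%R (mulr_ge0_le0 hx hy).
  by rewrite e1 e2 e3 e4 e5 e6; split; ring.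
- have [e1 e2] := p3 _ hx; have [e3 e4] := p1 _ hy.
  have [e5 e6] := p3 (x * y)%R (mulr_le0_ge0 hx hy).
  by rewrite e1 e2 e3 e4 e5 e6; split; ring.
- have [e1 e2] := p3 _ hx; have [e3 e4] := p3 _ hy.
  have [e5 e6] := p1 (x * y)%R (mulr_le0 hx hy).
  by rewrite e1 e2 e3 e4 e5 e6; split; ring.
Qed.

Lemma max_mono (R : realType) (x y : R) : (x <= y)%R -> (Num.max x 0 <= Num.max y 0)%R.
Proof. by move=> xy; rewrite ge_max !le_max xy lexx !orbT. Qed.

Lemma NA_of_PNA (R : realType) (mu : distr R) (Sg : {fset {fset var}}) (Y : {fset var}) :
  valid_distr mu -> PNA mu Sg -> Defs.cover Sg = Y ->
  (forall X, X `<=` Y -> exists F, F `<=` Sg /\ X = Defs.cover F) ->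
  NA mu Y.
Proof.
move=> v pna cSg Fex; split; first by rewrite -cSg; case: pna => _ [].
move=> A B AY BY dAB f g mono bf bg.
pose p := fun m => Num.max (f m) 0%R.
pose q := fun m => Num.max (- f m)%R 0%R.
pose r := fun m => Num.max (g m) 0%R.
pose s := fun m => Num.max (- g m)%R 0%R.
have ge0max : forall z : R, (0 <= Num.max z 0)%R by move=> z; rewrite le_max lexx orbT.
have Hfg : Ex mu (fun m => f (restr A m) * g (restr B m))%R =
  (Enn mu (fun m => p (restr A m) * r (restr B m))%R + Enn mu (fun m => q (restr A m) * s (restr B m))%R)
  - (Enn mu (fun m => p (restr A m) * s (restr B m))%R + Enn mu (fun m => q (restr A m) * r (restr B m))%R).
  rewrite /Ex -!Enn_add //; try by move=> m; apply: mulr_ge0; apply: ge0max.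
  congr (_ - _); apply: Enn_ext => m; by case: (maxmul (f (restr A m)) (g (restr B m))).
have mp : forall (C : {fset var}) (u : rmem R -> R), nondecr_on C u ->
    nondecr_on C (fun m => Num.max (u m) 0%R) /\ nonincr_on C (fun m => Num.max (- u m)%R 0%R).
  move=> C u H; split => m m' mm'; apply: max_mono; last rewrite lerN2; exact: H.
have mn : forall (C : {fset var}) (u : rmem R -> R), nonincr_on C u ->
    nonincr_on C (fun m => Num.max (u m) 0%R) /\ nondecr_on C (fun m => Num.max (- u m)%R 0%R).
  move=> C u H; split => m m' mm'; apply: max_mono; last rewrite lerN2; exact: H.
have bB := basicB v pna cSg Fex AY BY dAB.
have bM := mixedM v pna cSg Fex AY BY dAB.
have [I1 [I2 [I3 I4]]] :
  Enn mu (fun m => p (restr A m) * r (restr B m))%R <= Enn mu (fun m => p (restr A m)) * Enn mu (fun m => r (restr B m)) /\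
  Enn mu (fun m => q (restr A m) * s (restr B m))%R <= Enn mu (fun m => q (restr A m)) * Enn mu (fun m => s (restr B m)) /\
  Enn mu (fun m => p (restr A m)) * Enn mu (fun m => s (restr B m)) <= Enn mu (fun m => p (restr A m) * s (restr B m))%R /\
  Enn mu (fun m => q (restr A m)) * Enn mu (fun m => r (restr B m)) <= Enn mu (fun m => q (restr A m) * r (restr B m))%R.
  case: mono => [[mf mg]|[mf mg]].
    have [pf qf] := mp _ _ mf; have [rg sg] := mp _ _ mg.
    split; first by apply: bB => [m|m|]; [exact: ge0max|exact: ge0max|left].
    split; first by apply: bB => [m|m|]; [exact: ge0max|exact: ge0max|right].
    split; first by apply: bM => [m|m|]; [exact: ge0max|exact: ge0max|left].
    by apply: bM => [m|m|]; [exact: ge0max|exact: ge0max|right].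
  have [pf qf] := mn _ _ mf; have [rg sg] := mn _ _ mg.
  split; first by apply: bB => [m|m|]; [exact: ge0max|exact: ge0max|right].
  split; first by apply: bB => [m|m|]; [exact: ge0max|exact: ge0max|left].
  split; first by apply: bM => [m|m|]; [exact: ge0max|exact: ge0max|right].
  by apply: bM => [m|m|]; [exact: ge0max|exact: ge0max|left].
have Ef : (Enn mu (fun m => p (restr A m)) \is a fin_num) \/ (Enn mu (fun m => q (restr A m)) \is a fin_num).
  case: bf => [[c hc]|[c hc]]; [right|left].
    rewrite (@Enn_bnd _ _ _ (Num.max (- c)%R 0%R) v)// => m.
    by rewrite ge0max /= max_mono// lerN2.
  rewrite (@Enn_bnd _ _ _ (Num.max c 0%R) v)// => m.
  by rewrite ge0max /= max_mono.
have Eg : (Enn mu (fun m => r (restr B m)) \is a fin_num) \/ (Enn mu (fun m => s (restr B m)) \is a fin_num).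
  case: bg => [[c hc]|[c hc]]; [right|left].
    rewrite (@Enn_bnd _ _ _ (Num.max (- c)%R 0%R) v)// => m.
    by rewrite ge0max /= max_mono// lerN2.
  rewrite (@Enn_bnd _ _ _ (Num.max c 0%R) v)// => m.
  by rewrite ge0max /= max_mono.
rewrite Hfg; apply: le_trans (leeB (leeD I1 I2) (leeD I3 I4)) _.
have e0 : forall (C : {fset var}) (u : rmem R -> R), 0 <= Enn mu (fun m => Num.max (u (restr C m)) 0%R).
  by move=> C u; apply: Enn_ge0 => // m; exact: ge0max.
exact: (earith (e0 A f) (e0 A (fun m => - f m)%R) (e0 B g) (e0 B (fun m => - g m)%R) Ef Eg).
Qed.

Lemma bwd (R : realType) (mu : distr R) (K : nat) (y : nat -> var) :
  valid_distr mu -> (0 < K)%N ->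
  (forall sigma : dmem R, (forall x, x \in sdom sigma -> ~~ isRV x) ->
        istar (fun i => @sat_var R (y i)) K sigma mu) ->
  NA mu [fset y i | i in iota 0 K].
Proof.
move=> v K0 H.
have hs : forall z : var, z \in sdom (DMem fset0 (fun _ : var => (0 : R)%R)) -> ~~ isRV z.
  by move=> z; rewrite /= in_fset0.
have pna := PNA_of_istar K0 v (H _ hs).
apply: (NA_of_PNA v pna).
  apply/fsetP => x; apply/bigfcupP/idP.
    move=> [X /andP[/imfsetP[i /= iK ->] _]]; rewrite in_fset1 => /eqP ->.
    by apply/imfsetP; exists i.
  move=> /imfsetP[i /= iK ->]; exists [fset y i]; last by rewrite in_fset1.
  by rewrite andbT; apply/imfsetP; exists i.
move=> X XY; exists [fset [fset x] | x in X]; split.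
  apply/fsubsetP => Z /imfsetP[x /= xX ->].
  have /imfsetP[i /= iK ->] := fsubsetP XY x xX.
  by apply/imfsetP; exists i.
apply/fsetP => x; apply/idP/bigfcupP.
  move=> xX; exists [fset x]; last by rewrite in_fset1.
  by rewrite andbT; apply/imfsetP; exists x.
move=> [Z /andP[/imfsetP[z /= zX ->] _]]; by rewrite in_fset1 => /eqP ->.
Qed.

Local Close Scope ereal_scope.
Local Close Scope ring_scope.

Theorem mainTheorem12 (R : realType) (mu : distr R) (K : nat) (y : nat -> var) :
  valid_distr mu ->
  (forall x, x \in ddom mu -> isRV x) ->
  (0 < K)%N ->
  (forall i, (i < K)%N -> isRV (y i)) ->
  (forall i j, (i < K)%N -> (j < K)%N -> y i = y j -> i = j) ->
  NA mu [fset y i | i in iota 0 K]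
  <-> (forall sigma : dmem R, (forall x, x \in sdom sigma -> ~~ isRV x) ->
        istar (fun i => @sat_var R (y i)) K sigma mu).
Proof.
move=> v _ K0 _ inj; split.
  by move=> na sigma _; apply: fwd.
exact: bwd.
Qed.
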